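(* Let $X = X(n;S)$ be a (simple, undirected) circulant graph. Then $X$ is edge-transitive if and only if it is arc-transitive. *)

(* Defs.v *)
From mathcomp Require Import all_boot all_order all_fingroup.
Set Implicit Arguments. Unset Strict Implicit. Unset Printing Implicit Defensive.

(* Vertices of X(n;S) are the residues 0..n-1 ('I_n), arithmetic mod n done in nat. *)

Definition circulant_set (n : nat) (S : {set 'I_n}) : Prop :=
  (forall s : 'I_n, s \in S -> val s != 0) /\
  (forall s : 'I_n, s \in S -> exists2 t : 'I_n, t \in S & val t = (n - val s) %% n).

Definition circ_adj (n : nat) (S : {set 'I_n}) : rel 'I_n :=
  fun x y => [exists s in S, val s == (val y + (n - val x)) %% n].

Definition is_aut (T : finType) (adj : rel T) (g : {perm T}) : Prop :=
  forall x y, adj (g x) (g y) = adj x y.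

Definition edge_transitive (T : finType) (adj : rel T) : Prop :=
  forall u v x y, adj u v -> adj x y ->
    exists2 g : {perm T}, is_aut adj g &
      ((g u = x /\ g v = y) \/ (g u = y /\ g v = x)).

Definition arc_transitive (T : finType) (adj : rel T) : Prop :=
  forall u v x y, adj u v -> adj x y ->
    exists2 g : {perm T}, is_aut adj g & (g u = x /\ g v = y).

(* Main.v *)
Require Import Defs.
From mathcomp Require Import all_boot all_order all_fingroup.
From mathcomp Require Import zify.

Lemma subm (n k w m : nat) : w <= n ->
  (k + (n - w) == m %[mod n]) = (k == m + w %[mod n]).
Proof.
move=> hw; rewrite -(eqn_modDr w) -addnA subnK //.
by rewrite -modnDmr modnn addn0.
Qed.

Lemma adj_sym (n : nat) (S : {set 'I_n}) x y :
  circulant_set S -> circ_adj S x y -> circ_adj S y x.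
Proof.
move=> [_ Hsym] /existsP [s /andP [sS /eqP es]].
case: (Hsym s sS) => t tS et; apply/existsP; exists t; rewrite tS /= et.
have hs : (y + (n - x) == s %[mod n]) by rewrite es modn_mod.
rewrite subm in hs; last exact: ltnW (ltn_ord x).
rewrite eq_sym subm; last exact: ltnW (ltn_ord y).
rewrite -modnDmr (eqP hs) modnDmr.
have -> : n - s + (s + x) = x + n.
  have := ltn_ord s; lia.
by rewrite modnDr.
Qed.

Theorem mainTheorem5 (n : nat) (S : {set 'I_n}) :
  circulant_set S ->
  (edge_transitive (circ_adj S) <-> arc_transitive (circ_adj S)).
Proof.
move=> HS; split; last first.
  by move=> Ha u v x y huv hxy; case: (Ha u v x y huv hxy) => g ga gs; exists g => //; left.
move=> He u v x y huv hxy.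
case: (He u v x y huv hxy) => g ga [gs|[gu gv]]; first by exists g.
have n0 : 0 < n by have := ltn_ord u; lia.
pose c := nat_of_ord x + nat_of_ord y.
pose hf (z : 'I_n) : 'I_n := Ordinal (ltn_pmod (c + (n - val z)) n0).
have hK : involutive hf.
  move=> z; apply: val_inj => /=.
  rewrite -[X in _ = X](modn_small (ltn_ord z)).
  apply/eqP; rewrite subm; last exact: ltnW (ltn_pmod _ n0).
  rewrite modnDmr.
  have -> : z + (c + (n - z)) = c + n by have := ltn_ord z; lia.
  by rewrite modnDr.
pose h := perm (can_inj hK).
have hE z : h z = hf z by rewrite permE.
have hval a b : (val (hf b) + (n - val (hf a))) %% n = (val a + (n - val b)) %% n.
  apply/eqP; rewrite subm; last exact: ltnW (ltn_pmod _ n0).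
  rewrite /= modnDmr.
  have -> : a + (n - b) + (c + (n - a)) = (c + (n - b)) + n.
    have := ltn_ord a; have := ltn_ord b; lia.
  by rewrite modnDr modn_mod.
have hadj a b : circ_adj S (h a) (h b) = circ_adj S b a.
  rewrite !hE /circ_adj; apply: eq_existsb => s; by rewrite hval.
have ha : is_aut (circ_adj S) h.
  move=> a b; rewrite hadj; apply/idP/idP; exact: adj_sym.
exists (g * h)%g.
  by move=> a b; rewrite !permM ha ga.
rewrite !permM gu gv !hE; split; apply: val_inj => /=.
  have -> : c + (n - y) = x + n.
    rewrite /c; have hy := ltn_ord y; lia.
  by rewrite modnDr modn_small.
have -> : c + (n - x) = y + n.
  rewrite /c; have hx := ltn_ord x; lia.
by rewrite modnDr modn_small.
Qed.
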